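(* Let $\mathfrak g$ be a finite-dimensional complex simple Lie algebra and $q\in\mathbb C^\times$ not a root of unity. (i) For all $w\in W$ and $\boldsymbol\varpi\in\mathcal P_q$, $\mathrm{wt}(T_w\boldsymbol\varpi)=w(\mathrm{wt}(\boldsymbol\varpi))$. (ii) Suppose $\boldsymbol\varpi_1,\boldsymbol\varpi_2\in\mathcal P_q$ satisfy $\mathrm{wt}(\boldsymbol\varpi_r)\in P^+$ for $r=1,2$, and $w_1,w_2\in W$. If $T_{w_1}\boldsymbol\varpi_1=T_{w_2}\boldsymbol\varpi_2$ then $\mathrm{wt}(\boldsymbol\varpi_1)=\mathrm{wt}(\boldsymbol\varpi_2)$, and, setting $\lambda=\mathrm{wt}(\boldsymbol\varpi_1)$, $w_1^{-1}w_2\in W(\lambda)$.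
   Context: $I=\{1,\dots,n\}$, $(a_{ij})$ the Cartan matrix of $\mathfrak g$, $\omega_i$ the fundamental weights, $\check\alpha_i$ simple coroots, $P$ the weight lattice, $P^+$ dominant weights, $W$ the Weyl group with simple reflections $s_i$; for $\lambda\in P^+$, $W(\lambda)$ is the subgroup generated by $\{s_i:\lambda(\check\alpha_i)=0\}$. $d_i$ positive integers with $(d_ia_{ij})$ symmetric, $q_i=q^{d_i}$. $\mathcal P_q=\mathbb A^n$ with $\mathbb A$ the multiplicative group of rational functions with value 1 at $u=0$; $\boldsymbol\omega_{i,a}$ has $i$-th entry $1-au$ and others $1$ (these freely generate $\mathcal P_q$); $\mathrm{wt}:\mathcal P_q\to P$ is the homomorphism with $\mathrm{wt}(\boldsymbol\omega_{i,a})=\omega_i$. Braid action: $(T_i\boldsymbol\varpi)_j=\varpi_j$ if $a_{ji}=0$; $\varpi_j(u)\varpi_i(q_iu)$ if $a_{ji}=-1$; $\varpi_j(u)\varpi_i(q^3u)\varpi_i(qu)$ if $a_{ji}=-2$; $\varpi_j(u)\varpi_i(q^5u)\varpi_i(q^3u)\varpi_i(qu)$ if $a_{ji}=-3$; $(T_i\boldsymbol\varpi)_i=1/\varpi_i(q_i^2u)$; $T_w=T_{i_1}\cdots T_{i_k}$ for a reduced expression $w=s_{i_1}\cdots s_{i_k}$. *)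

(* Defs.v *)
From HB Require Import structures.
From mathcomp Require Import all_boot all_order all_algebra.
From mathcomp Require Import reals complex.
Set Implicit Arguments. Unset Strict Implicit. Unset Printing Implicit Defensive.
Import Order.TTheory GRing.Theory Num.Theory.
Local Open Scope ring_scope.

(* Convention: A i j = a_ij = alpha_j(check alpha_i), so alpha_i = sum_j a_ji omega_j. *)

Definition simple_cartan (R : realType) (n : nat) (A : 'M[int]_n) (d : 'I_n -> nat) : Prop :=
  (0 < n)%N /\
  (forall i, A i i = 2) /\
  (forall i j, i != j -> A i j <= 0) /\
  (forall i j, A i j = 0 <-> A j i = 0) /\
  (forall i, (0 < d i)%N) /\
  (forall i j, (d i)%:Z * A i j = (d j)%:Z * A j i) /\
  (forall S : {set 'I_n}, S != set0 -> S != setT ->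
     exists i j, [/\ i \in S, j \notin S & A i j != 0]) /\
  (* finite type: the symmetrized matrix (d_i a_ij) is positive definite *)
  (forall x : 'I_n -> R, (exists i, x i != 0) ->
     0 < \sum_i \sum_j x i * ((d i)%:R * (A i j)%:~R) * x j).

(* Weight lattice P, in coordinates w.r.t. fundamental weights:
   lambda = sum_i lambda i * omega_i, lambda i = lambda(check alpha_i). *)
Definition weight (n : nat) := 'I_n -> int.

Definition dominant (n : nat) (l : weight n) : Prop := forall i, 0 <= l i.

(* simple reflection: s_i lambda = lambda - lambda(check alpha_i) alpha_i *)
Definition sref (n : nat) (A : 'M[int]_n) (i : 'I_n) (l : weight n) : weight n :=
  fun j => l j - l i * A j i.

(* Elements of W are represented by words (s_{i1} ... s_{ik} <-> [:: i1; ...; ik]);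
   two words are the same element of W iff they act identically on P
   (W acts faithfully on P, since P spans h^* ). *)
Definition wact (n : nat) (A : 'M[int]_n) (w : seq 'I_n) (l : weight n) : weight n :=
  foldr (sref A) l w.

Definition weq (n : nat) (A : 'M[int]_n) (w w' : seq 'I_n) : Prop :=
  forall l, wact A w l = wact A w' l.

Definition reduced (n : nat) (A : 'M[int]_n) (w : seq 'I_n) : Prop :=
  forall w', weq A w w' -> (size w <= size w')%N.

Definition winv (n : nat) (w : seq 'I_n) : seq 'I_n := rev w.

Definition in_stab (n : nat) (A : 'M[int]_n) (l : weight n) (w : seq 'I_n) : Prop :=
  exists v : seq 'I_n, all (fun i => l i == 0) v /\ weq A v w.

(* A rational function f(u) is represented as a pair (numerator, denominator)
   of polynomials in u; it lies in the group A when both have value 1 at u = 0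
   (every rational function with value 1 at 0 has such a representation). *)
Definition ratf (F : fieldType) := ({poly F} * {poly F})%type.

Definition inA (F : fieldType) (f : ratf F) : Prop := f.1.[0] = 1 /\ f.2.[0] = 1.

Definition req (F : fieldType) (f g : ratf F) : Prop := f.1 * g.2 = g.1 * f.2.

Definition rmul (F : fieldType) (f g : ratf F) : ratf F := (f.1 * g.1, f.2 * g.2).
Definition rinv (F : fieldType) (f : ratf F) : ratf F := (f.2, f.1).
Definition rsub (F : fieldType) (c : F) (f : ratf F) : ratf F :=
  (f.1 \Po (c *: 'X), f.2 \Po (c *: 'X)).

(* elements of P_q = A^n *)
Definition Pq (F : fieldType) (n : nat) := 'I_n -> ratf F.
Definition inPq (F : fieldType) (n : nat) (p : Pq F n) : Prop := forall i, inA (p i).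
Definition Pq_eq (F : fieldType) (n : nat) (p p' : Pq F n) : Prop := forall i, req (p i) (p' i).

(* wt : P_q -> P, the homomorphism with wt(omega_{i,a}) = omega_i:
   the i-th coordinate is deg(numerator_i) - deg(denominator_i). *)
Definition wt (F : fieldType) (n : nat) (p : Pq F n) : weight n :=
  fun i => (size (p i).1)%:Z - (size (p i).2)%:Z.

Definition Tbraid (F : fieldType) (n : nat) (A : 'M[int]_n) (d : 'I_n -> nat) (q : F)
    (i : 'I_n) (p : Pq F n) : Pq F n :=
  fun j =>
    if j == i then rinv (rsub (q ^+ (2 * d i)) (p i))
    else if A j i == -1 then rmul (p j) (rsub (q ^+ d i) (p i))
    else if A j i == -2 then rmul (p j) (rmul (rsub (q ^+ 3) (p i)) (rsub q (p i)))
    else if A j i == -3 then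
      rmul (p j) (rmul (rsub (q ^+ 5) (p i)) (rmul (rsub (q ^+ 3) (p i)) (rsub q (p i))))
    else p j.

Definition Tw (F : fieldType) (n : nat) (A : 'M[int]_n) (d : 'I_n -> nat) (q : F)
    (w : seq 'I_n) (p : Pq F n) : Pq F n :=
  foldr (Tbraid A d q) p w.

Definition not_root_of_unity (F : fieldType) (q : F) : Prop :=
  q != 0 /\ forall k : nat, (0 < k)%N -> q ^+ k != 1.

(* Main.v *)
Require Import Defs.
From HB Require Import structures.
From mathcomp Require Import all_boot all_order all_algebra.
From mathcomp Require Import reals complex.
From mathcomp Require Import boolp.
From mathcomp Require Import ring lra zify.
Set Implicit Arguments. Unset Strict Implicit. Unset Printing Implicit Defensive.
Import Order.TTheory GRing.Theory Num.Theory.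
Local Open Scope ring_scope.

Section Weyl.
Variable n : nat.
Variable A : 'M[int]_n.
Hypothesis HAii : forall i, A i i = 2.

Lemma wact_cat (u v : seq 'I_n) l : wact A (u ++ v) l = wact A u (wact A v l).
Proof. by rewrite /wact foldr_cat. Qed.

Lemma sref_inv i l : sref A i (sref A i l) = l.
Proof.
apply/funext => j; rewrite /sref HAii; ring.
Qed.

Lemma wact_rev u l : wact A (rev u) (wact A u l) = l.
Proof.
elim: u l => [//|i u IH] l.
by rewrite rev_cons -cats1 wact_cat /= sref_inv IH.
Qed.

Lemma wact_rev' u l : wact A u (wact A (rev u) l) = l.
Proof. by rewrite -{1}(revK u) wact_rev. Qed.

Lemma weq_refl u : weq A u u. Proof. by []. Qed.
Lemma weq_sym u v : weq A u v -> weq A v u. Proof. by move=> h l; rewrite h. Qed.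
Lemma weq_trans u v w : weq A u v -> weq A v w -> weq A u w.
Proof. by move=> h1 h2 l; rewrite h1 h2. Qed.
Lemma weq_catl u v w : weq A u v -> weq A (w ++ u) (w ++ v).
Proof. by move=> h l; rewrite !wact_cat h. Qed.
Lemma weq_catr u v w : weq A u v -> weq A (u ++ w) (v ++ w).
Proof. by move=> h l; rewrite !wact_cat h. Qed.
Lemma weq_ii i : weq A [:: i; i] [::].
Proof. by move=> l; rewrite /= sref_inv. Qed.

Lemma weq_rev u v : weq A u v -> weq A (rev u) (rev v).
Proof.
move=> h l.
by rewrite -{1}(wact_rev' v l) -h wact_rev.
Qed.

Lemma wlen_ex w : exists k, `[< exists w', weq A w w' /\ size w' = k >].
Proof. by exists (size w); apply/asboolP; exists w. Qed.

Definition wlen w := ex_minn (wlen_ex w).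

Lemma wlen_rep w : exists w', weq A w w' /\ size w' = wlen w.
Proof. rewrite /wlen; case: ex_minnP => k /asboolP h _; exact: h. Qed.

Lemma wlen_min w w' : weq A w w' -> (wlen w <= size w')%N.
Proof.
move=> h; rewrite /wlen; case: ex_minnP => k _ hm; apply: hm.
by apply/asboolP; exists w'.
Qed.

Lemma wlen_size w : (wlen w <= size w)%N.
Proof. exact: wlen_min. Qed.

Lemma wlen_weq u v : weq A u v -> wlen u = wlen v.
Proof.
move=> h; apply/eqP; rewrite eqn_leq.
case: (wlen_rep u) => u' [hu su]; case: (wlen_rep v) => v' [hv sv].
apply/andP; split.
  by rewrite -sv; apply: wlen_min (weq_trans h hv).
by rewrite -su; apply: wlen_min (weq_trans (weq_sym h) hu).
Qed.

Lemma wlen_cat u v : (wlen (u ++ v) <= wlen u + wlen v)%N.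
Proof.
case: (wlen_rep u) => u' [hu su]; case: (wlen_rep v) => v' [hv sv].
rewrite -su -sv -size_cat; apply: wlen_min.
exact: weq_trans (weq_catr _ hu) (weq_catl _ hv).
Qed.

Lemma wlen_consS u i : (wlen u <= (wlen (u ++ [:: i])).+1)%N.
Proof.
have h : weq A u ((u ++ [:: i]) ++ [:: i]).
  rewrite -catA /=; move=> l; rewrite wact_cat /= sref_inv //.
rewrite (wlen_weq h); apply: leq_trans (wlen_cat _ _) _.
by rewrite -addn1 leq_add2l (wlen_size [:: i]).
Qed.


Definition cstep i (c : 'I_n -> int) : 'I_n -> int :=
  fun j => c j - (j == i)%:R * \sum_k A k i * c k.
Definition cact (w : seq 'I_n) c := foldr cstep c w.
Definition pairing (l : weight n) (c : 'I_n -> int) := \sum_k l k * c k.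
Definition ee (i : 'I_n) : 'I_n -> int := fun j => (j == i)%:R.

Lemma sum_delta (f : 'I_n -> int) i : \sum_k f k * (k == i)%:R = f i.
Proof.
rewrite (bigD1 i) //= eqxx mulr1 big1 ?addr0 // => k /negbTE ->; by rewrite mulr0.
Qed.

Lemma pairing_step i l c : pairing (sref A i l) (cstep i c) = pairing l c.
Proof.
rewrite /pairing /sref /cstep.
set S := \sum_k A k i * c k.
have E : forall k, (l k - l i * A k i) * (c k - (k == i)%:R * S) =
   l k * c k - l i * (A k i * c k) - S * (l k * (k == i)%:R)
   + l i * S * (A k i * (k == i)%:R) by move=> k; ring.
rewrite (eq_bigr _ (fun k _ => E k)) !big_split /= !sumrN -!mulr_sumr !sum_delta HAii.
rewrite -/S; ring.
Qed.

Lemma pairing_act w l c : pairing (wact A w l) (cact w c) = pairing l c.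
Proof. by elim: w => [//|i w IH] /=; rewrite pairing_step. Qed.

Lemma pairing_ee l i : pairing l (ee i) = l i.
Proof. exact: sum_delta. Qed.

Lemma pairing_eer c k : pairing (ee k) c = c k.
Proof. by rewrite /pairing -(sum_delta c k); apply: eq_bigr => j _; rewrite mulrC. Qed.

Lemma cact_cat u v c : cact (u ++ v) c = cact u (cact v c).
Proof. by rewrite /cact foldr_cat. Qed.

Lemma cact_weq u v c : weq A u v -> cact u c = cact v c.
Proof.
move=> h.
have key : forall w mu, pairing mu (cact w c) = pairing (wact A (rev w) mu) c.
  by move=> w mu; rewrite -(pairing_act w (wact A (rev w) mu)) wact_rev'.
apply/funext => k; rewrite -!pairing_eer !key.
by rewrite (weq_rev h).
Qed.

Lemma cstep_lin i p q c1 c2 :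
  cstep i (fun j => p * c1 j + q * c2 j) = fun j => p * cstep i c1 j + q * cstep i c2 j.
Proof.
apply/funext => j; rewrite /cstep.
have E : forall k, A k i * (p * c1 k + q * c2 k) = p * (A k i * c1 k) + q * (A k i * c2 k)
  by move=> k; ring.
rewrite (eq_bigr _ (fun k _ => E k)) big_split /= -!mulr_sumr; ring.
Qed.

Lemma cact_lin w p q c1 c2 :
  cact w (fun j => p * c1 j + q * c2 j) = fun j => p * cact w c1 j + q * cact w c2 j.
Proof. by elim: w => [//|i w IH] /=; rewrite IH cstep_lin. Qed.

Lemma cact_ii i : cact [:: i] (ee i) = fun j => - ee i j.
Proof.
apply/funext => j; rewrite /= /cstep /ee sum_delta HAii; ring.
Qed.

End Weyl.

Section Dihedral.
Variable n : nat.
Variable A : 'M[int]_n.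
Hypothesis HAii : forall i, A i i = 2.
Variables s s' : 'I_n.
Hypothesis hss : s != s'.

Definition tr (b : bool) := if b then s else s'.
Fixpoint altb (k : nat) : seq bool := if k is k'.+1 then odd k' :: altb k' else [::].
Definition sup2 (p q : int) : 'I_n -> int := fun j => p * ee s j + q * ee s' j.

Fixpoint G (a b : int) (bs : seq bool) (pq : int * int) : int * int :=
  match bs with
  | [::] => pq
  | x :: r => let pq' := G a b r pq in
      if x then (- pq'.1 - b * pq'.2, pq'.2) else (pq'.1, - pq'.2 - a * pq'.1)
  end.

Lemma cstep_s p q : cstep A s (sup2 p q) = sup2 (- p - A s' s * q) q.
Proof.
apply/funext => j; rewrite /cstep /sup2.
have E : forall k, A k s * (p * ee s k + q * ee s' k) = p * (A k s * ee s k) + q * (A k s * ee s' k)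
  by move=> k; ring.
rewrite (eq_bigr _ (fun k _ => E k)) big_split /= -!mulr_sumr !(sum_delta (fun k => A k _)) HAii.
rewrite /ee; ring.
Qed.

Lemma cstep_s' p q : cstep A s' (sup2 p q) = sup2 p (- q - A s s' * p).
Proof.
apply/funext => j; rewrite /cstep /sup2.
have E : forall k, A k s' * (p * ee s k + q * ee s' k) = p * (A k s' * ee s k) + q * (A k s' * ee s' k)
  by move=> k; ring.
rewrite (eq_bigr _ (fun k _ => E k)) big_split /= -!mulr_sumr !(sum_delta (fun k => A k _)) HAii.
rewrite /ee; ring.
Qed.

Lemma cact_G bs p q :
  cact A (map tr bs) (sup2 p q) = sup2 (G (A s s') (A s' s) bs (p, q)).1 (G (A s s') (A s' s) bs (p, q)).2.
Proof.
elim: bs => [//|x bs IH] /=; rewrite IH; case: x => /=; [exact: cstep_s | exact: cstep_s'].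
Qed.

Lemma ee_sup2 : ee s = sup2 1 0.
Proof. by apply/funext => j; rewrite /sup2; ring. Qed.


Lemma wlen_cons_red i w : wlen A (i :: w) = (size w).+1 -> wlen A w = size w.
Proof.
move=> h; apply/eqP; rewrite eqn_leq wlen_size /=.
have := wlen_cat A [:: i] w; rewrite /= h.
move=> h2; have h3 := wlen_size A [:: i]; rewrite /= in h3.
rewrite -ltnS; apply: leq_trans h2 _.
by rewrite -addn1 addnC leq_add2l.
Qed.

Lemma altb_size k : size (altb k) = k.
Proof. by elim: k => //= k ->. Qed.

Lemma alt_shape bs : wlen A (map tr bs) = size bs -> last false bs = false ->
  bs = altb (size bs).
Proof.
elim: bs => [//|b bs IH] /= hl hlast.
have hr : wlen A (map tr bs) = size bs.
  rewrite -(size_map tr bs); apply: (@wlen_cons_red (tr b)); by rewrite size_map.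
have hlast' : last false bs = false.
  by case: bs hlast {IH hl hr} => [//|c bs'] /=.
have {}IH := IH hr hlast'.
congr (_ :: _); last exact: IH.
move: hl hlast; rewrite IH altb_size; case: (size bs) => [|k] /= hl hlast.
  by [].
case: (boolP (b == odd k)) => [/eqP eb|nb].
  exfalso.
  have hw : weq A (tr b :: tr (odd k) :: map tr (altb k)) (map tr (altb k)).
    by rewrite eb; move=> l /=; rewrite sref_inv.
  have := wlen_min hw; rewrite hl size_map altb_size; lia.
by clear hl hlast; move: nb; case: (odd k); case: b.
Qed.


Lemma altb_split m k : (m <= k)%N -> exists z, altb k = z ++ altb m /\ size z = (k - m)%N.
Proof.
elim: k => [|k IH].
  by rewrite leqn0 => /eqP ->; exists [::].
rewrite leq_eqVlt => /orP [/eqP <-|]; first by exists [::]; rewrite subnn.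
rewrite ltnS => hmk; case: (IH hmk) => z [hz sz]; exists (odd k :: z); split; first by rewrite /= hz.
by rewrite /= sz; lia.
Qed.

Lemma dihedral_gen (m : nat) : (0 < m)%N ->
  weq A (map tr (altb m) ++ [:: s]) (map tr (behead (altb m))) ->
  (forall k, (k < m)%N -> exists p q : int, 0 <= p /\ 0 <= q /\ cact A (map tr (altb k)) (ee s) = sup2 p q) ->
  forall bs, wlen A (map tr bs) = size bs ->
    (size bs <= wlen A (map tr bs ++ [:: s]))%N ->
    exists p q : int, 0 <= p /\ 0 <= q /\ cact A (map tr bs) (ee s) = sup2 p q.
Proof.
move=> m0 hbraid hpos bs hred hs.
have hlast : last false bs = false.
  case/lastP: bs hred hs => [//|bs0 x] hred hs.
  rewrite last_rcons; case: x hred hs => // hred hs; exfalso.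
  have hw : weq A (map tr (rcons bs0 true) ++ [:: s]) (map tr bs0).
    by rewrite map_rcons -cats1 -catA /= => l; rewrite wact_cat /= sref_inv.
  have := wlen_min hw; move: hs; rewrite !size_map size_rcons; lia.
have hb := alt_shape hred hlast.
set k := size bs in hb hs.
case: (ltnP k m) => hkm; first by rewrite hb; exact: hpos.
exfalso.
case: (altb_split hkm) => z [hz sz].
have hw : weq A (map tr bs ++ [:: s]) (map tr z ++ map tr (behead (altb m))).
  by rewrite hb hz map_cat -catA; apply: weq_catl.
have := wlen_min hw; rewrite size_cat !size_map size_behead altb_size sz.
move: hs; rewrite -/k; lia.
Qed.



Lemma dih_case2 : A s s' = 0 -> A s' s = 0 ->
  weq A (map tr (altb 2) ++ [:: s]) (map tr (behead (altb 2))) /\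
  (forall k, (k < 2)%N -> exists p q : int, 0 <= p /\ 0 <= q /\ cact A (map tr (altb k)) (ee s) = sup2 p q).
Proof.
move=> Ha Hb; split.
  move=> l; apply/funext => j; rewrite /= /sref /= ?HAii ?Ha ?Hb; ring.
move=> k hk; rewrite ee_sup2 cact_G Ha Hb.
eexists _, _; split; last split; last reflexivity;
  do 6? (case: k hk => [|k] hk; first by vm_compute);
  by [].
Qed.

Lemma dih_case3 : A s s' = -1 -> A s' s = -1 ->
  weq A (map tr (altb 3) ++ [:: s]) (map tr (behead (altb 3))) /\
  (forall k, (k < 3)%N -> exists p q : int, 0 <= p /\ 0 <= q /\ cact A (map tr (altb k)) (ee s) = sup2 p q).
Proof.
move=> Ha Hb; split.
  move=> l; apply/funext => j; rewrite /= /sref /= ?HAii ?Ha ?Hb; ring.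
move=> k hk; rewrite ee_sup2 cact_G Ha Hb.
eexists _, _; split; last split; last reflexivity;
  do 6? (case: k hk => [|k] hk; first by vm_compute);
  by [].
Qed.

Lemma dih_case4a : A s s' = -1 -> A s' s = -2 ->
  weq A (map tr (altb 4) ++ [:: s]) (map tr (behead (altb 4))) /\
  (forall k, (k < 4)%N -> exists p q : int, 0 <= p /\ 0 <= q /\ cact A (map tr (altb k)) (ee s) = sup2 p q).
Proof.
move=> Ha Hb; split.
  move=> l; apply/funext => j; rewrite /= /sref /= ?HAii ?Ha ?Hb; ring.
move=> k hk; rewrite ee_sup2 cact_G Ha Hb.
eexists _, _; split; last split; last reflexivity;
  do 6? (case: k hk => [|k] hk; first by vm_compute);
  by [].
Qed.

Lemma dih_case4b : A s s' = -2 -> A s' s = -1 ->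
  weq A (map tr (altb 4) ++ [:: s]) (map tr (behead (altb 4))) /\
  (forall k, (k < 4)%N -> exists p q : int, 0 <= p /\ 0 <= q /\ cact A (map tr (altb k)) (ee s) = sup2 p q).
Proof.
move=> Ha Hb; split.
  move=> l; apply/funext => j; rewrite /= /sref /= ?HAii ?Ha ?Hb; ring.
move=> k hk; rewrite ee_sup2 cact_G Ha Hb.
eexists _, _; split; last split; last reflexivity;
  do 6? (case: k hk => [|k] hk; first by vm_compute);
  by [].
Qed.

Lemma dih_case6a : A s s' = -1 -> A s' s = -3 ->
  weq A (map tr (altb 6) ++ [:: s]) (map tr (behead (altb 6))) /\
  (forall k, (k < 6)%N -> exists p q : int, 0 <= p /\ 0 <= q /\ cact A (map tr (altb k)) (ee s) = sup2 p q).
Proof.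
move=> Ha Hb; split.
  move=> l; apply/funext => j; rewrite /= /sref /= ?HAii ?Ha ?Hb; ring.
move=> k hk; rewrite ee_sup2 cact_G Ha Hb.
eexists _, _; split; last split; last reflexivity;
  do 6? (case: k hk => [|k] hk; first by vm_compute);
  by [].
Qed.

Lemma dih_case6b : A s s' = -3 -> A s' s = -1 ->
  weq A (map tr (altb 6) ++ [:: s]) (map tr (behead (altb 6))) /\
  (forall k, (k < 6)%N -> exists p q : int, 0 <= p /\ 0 <= q /\ cact A (map tr (altb k)) (ee s) = sup2 p q).
Proof.
move=> Ha Hb; split.
  move=> l; apply/funext => j; rewrite /= /sref /= ?HAii ?Ha ?Hb; ring.
move=> k hk; rewrite ee_sup2 cact_G Ha Hb.
eexists _, _; split; last split; last reflexivity;
  do 6? (case: k hk => [|k] hk; first by vm_compute);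
  by [].
Qed.

End Dihedral.

Section Tits.
Variable n : nat.
Variable A : 'M[int]_n.
Hypothesis HAii : forall i, A i i = 2.
Hypothesis Hclass : forall i j : 'I_n, i != j ->
  [/\ A i j <= 0, A j i <= 0, (A i j = 0 <-> A j i = 0) & A i j * A j i <= 3].

Lemma dihedral (s s' : 'I_n) : s != s' -> forall bs,
  wlen A (map (tr s s') bs) = size bs ->
  (size bs <= wlen A (map (tr s s') bs ++ [:: s]))%N ->
  exists p q : int, 0 <= p /\ 0 <= q /\ cact A (map (tr s s') bs) (ee s) = sup2 s s' p q.
Proof.
move=> hss.
have [h1 h2 h3 h4] := Hclass hss.
have : [\/ A s s' = 0 /\ A s' s = 0, A s s' = -1 /\ A s' s = -1,
          (A s s' = -1 /\ A s' s = -2) \/ (A s s' = -2 /\ A s' s = -1) |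
          (A s s' = -1 /\ A s' s = -3) \/ (A s s' = -3 /\ A s' s = -1)].
  case: (boolP (A s s' == 0)) => [/eqP e|ne].
    by apply: Or41; split => //; apply/h3.
  have ne' : A s' s != 0 by apply/negP => /eqP /h3 /eqP; exact/negP.
  move: ne ne'; set a := A s s'; set b := A s' s => ne ne'.
  have ha : a <= -1 by move: h1 ne; rewrite -/a; lia.
  have hb : b <= -1 by move: h2 ne'; rewrite -/b; lia.
  have hab : a * b <= 3 by [].
  have : (a == -1) || (b == -1) by nia.
  case/orP => /eqP e.
    have : b = -1 \/ b = -2 \/ b = -3 by move: hab hb; rewrite e; lia.
    by case=> [e'|[e'|e']]; [apply: Or42 | apply: Or43; left | apply: Or44; left].
  have : a = -1 \/ a = -2 \/ a = -3 by move: hab ha; rewrite e; lia.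
  by case=> [e'|[e'|e']]; [apply: Or42 | apply: Or43; right | apply: Or44; right].
case=> [[Ha Hb]|[Ha Hb]|[[Ha Hb]|[Ha Hb]]|[[Ha Hb]|[Ha Hb]]].
- by case: (dih_case2 HAii Ha Hb) => hb hp; exact: (dihedral_gen HAii hss _ hb hp).
- by case: (dih_case3 HAii Ha Hb) => hb hp; exact: (dihedral_gen HAii hss _ hb hp).
- by case: (dih_case4a HAii Ha Hb) => hb hp; exact: (dihedral_gen HAii hss _ hb hp).
- by case: (dih_case4b HAii Ha Hb) => hb hp; exact: (dihedral_gen HAii hss _ hb hp).
- by case: (dih_case6a HAii Ha Hb) => hb hp; exact: (dihedral_gen HAii hss _ hb hp).
- by case: (dih_case6b HAii Ha Hb) => hb hp; exact: (dihedral_gen HAii hss _ hb hp).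
Qed.


Definition nonneg (c : 'I_n -> int) := forall j, 0 <= c j.

Lemma wlen_snoc_le w i : (wlen A (w ++ [:: i]) <= (wlen A w).+1)%N.
Proof.
apply: leq_trans (wlen_cat A _ _) _; rewrite -addn1 leq_add2l.
exact: (wlen_size A [:: i]).
Qed.

Lemma search (w : seq 'I_n) (s s' : 'I_n) (k : nat) : forall j v bs,
  wlen A v = j -> (0 < size bs)%N -> weq A (v ++ map (tr s s') bs) w ->
  k = (wlen A v + size bs)%N ->
  exists v' bs', [/\ (0 < size bs')%N, weq A (v' ++ map (tr s s') bs') w,
     k = (wlen A v' + size bs')%N, (wlen A v' <= wlen A (v' ++ [:: s]))%N &
     (wlen A v' <= wlen A (v' ++ [:: s']))%N].
Proof.
move=> j; elim/ltn_ind: j => j IH v bs hj hb hw hk.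
case: (ltnP (wlen A (v ++ [:: s])) (wlen A v)) => h1.
  have e := wlen_consS HAii v s.
  apply: (IH (wlen A (v ++ [:: s])) _ (v ++ [:: s]) (true :: bs)) => //.
  - by rewrite -hj.
  - apply: weq_trans hw; rewrite -catA /=.
    apply: weq_catl => l; by rewrite /= sref_inv.
  - by rewrite hk /=; lia.
case: (ltnP (wlen A (v ++ [:: s'])) (wlen A v)) => h2.
  have e := wlen_consS HAii v s'.
  apply: (IH (wlen A (v ++ [:: s'])) _ (v ++ [:: s']) (false :: bs)) => //.
  - by rewrite -hj.
  - apply: weq_trans hw; rewrite -catA /=.
    apply: weq_catl => l; by rewrite /= sref_inv.
  - by rewrite hk /=; lia.
by exists v, bs.
Qed.

Lemma nonneg_ee i : nonneg (ee i).
Proof. by move=> j; rewrite /ee; case: (j == i). Qed.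

Theorem tits k : forall w, wlen A w = k -> forall s,
  (wlen A w <= wlen A (w ++ [:: s]))%N -> nonneg (cact A w (ee s)).
Proof.
elim/ltn_ind: k => k IH w hk s hs.
case: (wlen_rep A w) => w0 [hw0 sw0].
case/lastP: w0 hw0 sw0 => [|w1 s'] hw0 sw0.
  by rewrite (cact_weq HAii _ hw0); exact: nonneg_ee.
rewrite size_rcons in sw0; rewrite -cats1 in hw0.
have hss : s != s'.
  apply/negP => /eqP e; subst s'.
  have hw' : weq A (w ++ [:: s]) w1.
    apply: weq_trans (weq_catr _ hw0) _; rewrite -catA /=.
    by move=> l; rewrite wact_cat /= sref_inv.
  have := wlen_min hw'; move: hs sw0; rewrite hk; lia.
have hw1 : (wlen A w1 <= size w1)%N := wlen_size A w1.
have hw2 : (wlen A w <= (wlen A w1).+1)%N.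
  by rewrite (wlen_weq hw0); apply: wlen_snoc_le.
have [v [bs [hb hvw hkv hvs hvs']]] :=
  @search w s s' k _ w1 [:: false] erefl erefl (weq_sym hw0) ltac:(rewrite /=; lia).
have hvk : (wlen A v < k)%N by lia.
have nv := IH _ hvk v erefl s hvs.
have nv' := IH _ hvk v erefl s' hvs'.
have hcat := wlen_cat A v (map (tr s s') bs).
have hx1 : wlen A (map (tr s s') bs) = size bs.
  apply/eqP; rewrite eqn_leq.
  have := wlen_size A (map (tr s s') bs); rewrite size_map => ->.
  by move: hcat hkv; rewrite (wlen_weq hvw) hk; lia.
have hx2 : (size bs <= wlen A (map (tr s s') bs ++ [:: s]))%N.
  have hcat2 := wlen_cat A v (map (tr s s') bs ++ [:: s]).
  have e : wlen A (v ++ map (tr s s') bs ++ [:: s]) = wlen A (w ++ [:: s]).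
    by apply: wlen_weq; rewrite catA; apply: weq_catr.
  move: hcat2; rewrite e; move: hs; rewrite hk; lia.
have [p [q [hp [hq e]]]] := dihedral hss hx1 hx2.
rewrite -(cact_weq HAii _ hvw) cact_cat e /sup2 cact_lin => j.
by rewrite addr_ge0 // mulr_ge0.
Qed.


Lemma cact_neg w c : cact A w (fun j => - c j) = fun j => - cact A w c j.
Proof.
have := cact_lin A w (-1) 0 c c.
have e1 : (fun j => -1 * c j + 0 * c j) = (fun j => - c j) by apply/funext => j; ring.
have e2 : forall d : 'I_n -> int, (fun j => -1 * d j + 0 * d j) = (fun j => - d j)
  by move=> d; apply/funext => j; ring.
by rewrite e1 e2.
Qed.

Theorem stab w : wlen A w = size w -> forall l mu : weight n,
  dominant l -> dominant mu -> wact A w l = mu ->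
  l = mu /\ exists v, all (fun i => l i == 0) v /\ weq A v w.
Proof.
elim/last_ind: w => [|w i IH] hred l mu hl hmu hw.
  by split => //; exists [::].
have hred' : wlen A w = size w.
  apply/eqP; rewrite eqn_leq wlen_size /=.
  have := wlen_snoc_le w i; rewrite cats1 hred size_rcons; lia.
have hn : nonneg (cact A w (ee i)).
  apply: (tits erefl); rewrite cats1 hred hred' size_rcons; lia.
have hli : l i = 0.
  have e : l i = pairing l (ee i) by rewrite pairing_ee.
  have e2 : pairing l (ee i) = pairing mu (fun j => - cact A w (ee i) j).
    rewrite -hw -(pairing_act HAii (rcons w i)) -cats1 cact_cat cact_ii //.
    by rewrite cact_neg.
  apply/eqP; rewrite eq_le hl andbT e e2 /pairing.
  rewrite -oppr_ge0 -sumrN; apply: sumr_ge0 => j _.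
  by rewrite mulrN opprK mulr_ge0.
have hsl : sref A i l = l by apply/funext => j; rewrite /sref hli mul0r subr0.
have hw' : wact A w l = mu by rewrite -hw -cats1 wact_cat /= hsl.
have [elm [v [hv hvw]]] := IH hred' l mu hl hmu hw'.
split => //; exists (rcons v i); split.
  by rewrite all_rcons hli eqxx hv.
by rewrite -!cats1; apply: weq_catr.
Qed.

End Tits.

Section Poly.
Variable F : fieldType.

Definition wtf (f : ratf F) : int := (size f.1)%:Z - (size f.2)%:Z.

Lemma inA_nz (f : ratf F) : inA f -> f.1 != 0 /\ f.2 != 0.
Proof.
by case=> h1 h2; split; apply/negP => /eqP h; [move: h1 | move: h2]; rewrite h horner0 => /eqP; rewrite eq_sym oner_eq0.
Qed.

Lemma rsub_inA (c : F) (f : ratf F) : inA f -> inA (rsub c f).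
Proof.
by case=> h1 h2; split; rewrite /rsub /= horner_comp hornerZ hornerX mulr0.
Qed.

Lemma rmul_inA (f g : ratf F) : inA f -> inA g -> inA (rmul f g).
Proof. by case=> h1 h2 [h3 h4]; split; rewrite /rmul /= hornerM ?h1 ?h2 ?h3 ?h4 mulr1. Qed.

Lemma rinv_inA (f : ratf F) : inA f -> inA (rinv f).
Proof. by case=> h1 h2; split. Qed.

Lemma wtf_rsub (c : F) (f : ratf F) : c != 0 -> wtf (rsub c f) = wtf f.
Proof.
move=> hc; have h2 : size (c *: 'X : {poly F}) = 2 by rewrite size_scale // size_polyX.
by rewrite /wtf /rsub /= !size_comp_poly2.
Qed.

Lemma wtf_rmul (f g : ratf F) : inA f -> inA g -> wtf (rmul f g) = wtf f + wtf g.
Proof.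
move=> /inA_nz [f1 f2] /inA_nz [g1 g2]; rewrite /wtf /rmul /= !size_mul //.
have h1 : (0 < size f.1)%N by rewrite size_poly_gt0.
have h2 : (0 < size f.2)%N by rewrite size_poly_gt0.
have h3 : (0 < size g.1)%N by rewrite size_poly_gt0.
have h4 : (0 < size g.2)%N by rewrite size_poly_gt0.
move: (size f.1) (size f.2) (size g.1) (size g.2) h1 h2 h3 h4 => a b c e ha hb hc he.
clear f1 f2 g1 g2.
lia.
Qed.

Lemma wtf_rinv (f : ratf F) : wtf (rinv f) = - wtf f.
Proof. rewrite /wtf /rinv /=; ring. Qed.

Lemma req_wtf (f g : ratf F) : inA f -> inA g -> req f g -> wtf f = wtf g.
Proof.
move=> /inA_nz [f1 f2] /inA_nz [g1 g2]; rewrite /req /wtf => h.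
have := congr1 (fun p : {poly F} => size p) h; rewrite /= !size_mul //.
have h1 : (0 < size f.1)%N by rewrite size_poly_gt0.
have h2 : (0 < size f.2)%N by rewrite size_poly_gt0.
have h3 : (0 < size g.1)%N by rewrite size_poly_gt0.
have h4 : (0 < size g.2)%N by rewrite size_poly_gt0.
move: (size f.1) (size f.2) (size g.1) (size g.2) h1 h2 h3 h4 => a b c e ha hb hc he.
clear f1 f2 g1 g2 h.
lia.
Qed.

Variables (n : nat) (A : 'M[int]_n) (d : 'I_n -> nat) (q : F).

Lemma Tbraid_inPq i p : inPq p -> inPq (Tbraid A d q i p).
Proof.
move=> hp j; rewrite /Tbraid.
case: ifP => _; first by apply: rinv_inA; apply: rsub_inA.
case: ifP => _; first by apply: rmul_inA => //; apply: rsub_inA.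
case: ifP => _; first by apply: rmul_inA => //; apply: rmul_inA; apply: rsub_inA.
case: ifP => _; last by [].
apply: rmul_inA => //; apply: rmul_inA; first by apply: rsub_inA.
by apply: rmul_inA; apply: rsub_inA.
Qed.

Lemma Tw_inPq w p : inPq p -> inPq (Tw A d q w p).
Proof. by move=> hp; elim: w => [//|i w IH] /=; apply: Tbraid_inPq. Qed.

Hypothesis hq : q != 0.
Hypothesis HAii : forall i, A i i = 2.
Hypothesis Hoff : forall i j, j != i -> [\/ A j i = 0, A j i = -1, A j i = -2 | A j i = -3].

Lemma Tbraid_wt i p : inPq p -> wt (Tbraid A d q i p) = sref A i (wt p).
Proof.
move=> hp; apply/funext => j.
have hqk : forall k, q ^+ k != 0 by move=> k; rewrite expf_neq0.
rewrite /wt /sref -!/(wtf _) /Tbraid.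
case: ifP => [/eqP ->|hji].
  by rewrite wtf_rinv wtf_rsub // HAii; ring.
have hji' : j != i by rewrite hji.
have e1 : (0 == -1 :> int) = false by [].
have e2 : (0 == -2 :> int) = false by [].
have e3 : (0 == -3 :> int) = false by [].
have e4 : (-2 == -1 :> int) = false by [].
have e5 : (-3 == -1 :> int) = false by [].
have e6 : (-3 == -2 :> int) = false by [].
have hi := hp i; have hj := hp j.
case: (Hoff hji') => ->; rewrite ?e1 ?e2 ?e3 ?e4 ?e5 ?e6 ?eqxx;
  rewrite ?wtf_rmul ?wtf_rsub; try ring.
all: repeat first [ apply: rmul_inA | apply: rsub_inA | apply: hqk | assumption ].
Qed.

Lemma Tw_wt w p : inPq p -> wt (Tw A d q w p) = wact A w (wt p).
Proof.
move=> hp; elim: w => [//|i w IH] /=.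
by rewrite Tbraid_wt ?IH //; apply: Tw_inPq.
Qed.

End Poly.

Lemma sum2 n (f : 'I_n -> int) i j : i != j ->
  (forall k, k != i -> k != j -> f k = 0) -> \sum_k f k = f i + f j.
Proof.
move=> hij hf; rewrite (bigD1 i) //= (bigD1 j) /=; last by rewrite eq_sym.
rewrite big1 ?addr0 // => k /andP [hk hk']; exact: hf.
Qed.

Lemma class_of_cartan (R : realType) n (A : 'M[int]_n) d : simple_cartan R A d ->
  forall i j : 'I_n, i != j ->
  [/\ A i j <= 0, A j i <= 0, (A i j = 0 <-> A j i = 0) & A i j * A j i <= 3].
Proof.
case=> _ [HAii [Hneg [Hz [Hd [Hsym [_ Hpd]]]]]] i j hij.
split; [exact: Hneg | by apply: Hneg; rewrite eq_sym | exact: Hz |].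
rewrite leNgt; apply/negP => hab.
set di : int := (d i)%:Z; set dj : int := (d j)%:Z.
set a := A i j; set b := A j i.
have hdi : 0 < di by rewrite /di ltz_nat Hd.
have hdj : 0 < dj by rewrite /dj ltz_nat Hd.
have hs : di * a = dj * b by exact: Hsym.
pose xz : 'I_n -> int := fun k => if k == i then - (di * a) else if k == j then 2 * di else 0.
have hx : exists k, (xz k)%:~R != 0 :> R.
  exists j; rewrite /xz (eq_sym j i) (negbTE hij) eqxx intr_eq0; lia.
have hQ := Hpd (fun k => (xz k)%:~R) hx.
have e : \sum_k \sum_l (xz k)%:~R * ((d k)%:R * (A k l)%:~R) * (xz l)%:~R =
   ((\sum_k \sum_l xz k * ((d k)%:Z * A k l) * xz l)%:~R : R).
  rewrite rmorph_sum; apply: eq_bigr => k _; rewrite rmorph_sum; apply: eq_bigr => l _.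
  by rewrite !rmorphM.
rewrite e ltr0z in hQ.
have hxz : forall k, k != i -> k != j -> xz k = 0.
  by move=> k hk hk'; rewrite /xz (negbTE hk) (negbTE hk').
rewrite (sum2 hij) in hQ; last first.
  by move=> k hk hk'; apply: big1 => l _; rewrite hxz // !mul0r.
rewrite !(sum2 hij) in hQ; try by move=> k hk hk'; rewrite (hxz k) // mulr0.
have xi : xz i = - (di * a) by rewrite /xz eqxx.
have xj : xz j = 2 * di by rewrite /xz (eq_sym j i) (negbTE hij) eqxx.
rewrite xi xj !HAii -/di -/dj -/a -/b in hQ.
have E : - (di * a) * (di * 2) * - (di * a) + - (di * a) * (di * a) * (2 * di) +
   (2 * di * (dj * b) * - (di * a) + 2 * di * (dj * 2) * (2 * di)) =
   2 * di * di * (4 * dj - a * (di * a)) + (- 2 * di * di * a) * (dj * b - di * a) by ring.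
rewrite E -hs subrr mulr0 addr0 hs in hQ.
have : 0 < 2 * di * di * dj * (4 - a * b).
  by move: hQ; congr (0 < _); ring.
have h1 : 0 <= 2 * di * di * dj by nia.
have h2 : 4 - a * b < 0 by move: hab; rewrite -/a -/b; nia.
nia.

Qed.

Theorem lemma2p5 (R : realType) (n : nat) (A : 'M[int]_n) (d : 'I_n -> nat)
    (q : R[i]) :
  simple_cartan R A d ->
  not_root_of_unity q ->
  (* (i) *)
  (forall (w : seq 'I_n) (p : Pq R[i] n), reduced A w -> inPq p ->
     wt (Tw A d q w p) = wact A w (wt p)) /\
  (* (ii) *)
  (forall (p1 p2 : Pq R[i] n) (w1 w2 : seq 'I_n),
     inPq p1 -> inPq p2 -> dominant (wt p1) -> dominant (wt p2) ->
     reduced A w1 -> reduced A w2 ->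
     Pq_eq (Tw A d q w1 p1) (Tw A d q w2 p2) ->
     wt p1 = wt p2 /\ in_stab A (wt p1) (winv w1 ++ w2)).
Proof.
move=> hc [hq0 _].
have HAii : forall i, A i i = 2 by case: hc => _ [h _].
have Hclass := class_of_cartan hc.
have Hoff : forall i j, j != i -> [\/ A j i = 0, A j i = -1, A j i = -2 | A j i = -3].
  move=> i j hji; have [h1 h2 h3 h4] := Hclass j i hji.
  case: (boolP (A j i == 0)) => [/eqP e|ne]; first exact: Or41.
  have ne' : A i j != 0 by apply/negP => /eqP /h3 /eqP; exact/negP.
  move: ne ne' h1 h2 h4; set a := A j i; set b := A i j => ne ne' h1 h2 h4.
  have ha : a <= -1 by lia.
  have hb : b <= -1 by lia.
  have : a = -1 \/ a = -2 \/ a = -3 by nia.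
  by case=> [e|[e|e]]; [apply: Or42 | apply: Or43 | apply: Or44].
split.
  by move=> w p _ hp; apply: (Tw_wt d hq0 HAii Hoff).
move=> p1 p2 w1 w2 hp1 hp2 hd1 hd2 _ _ heq.
have hwt : wact A w1 (wt p1) = wact A w2 (wt p2).
  rewrite -!(Tw_wt d hq0 HAii Hoff) //; apply/funext => i.
  by apply: req_wtf; [apply: Tw_inPq | apply: Tw_inPq | apply: heq].
have hu : wact A (rev w1 ++ w2) (wt p2) = wt p1.
  by rewrite wact_cat -hwt wact_rev.
case: (wlen_rep A (rev w1 ++ w2)) => w0 [hw0 sw0].
have hred : wlen A w0 = size w0 by rewrite -(wlen_weq hw0).
have hw0' : wact A w0 (wt p2) = wt p1 by rewrite -hw0.
have [e [v [hv hvw]]] := stab HAii Hclass hred hd2 hd1 hw0'.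
split; first by [].
exists v; split; first by rewrite -e.
exact: weq_trans hvw (weq_sym hw0).
Qed.
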